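(* Let $(R,+,\times)$ be a finite ring with identity $1$, of order $n$, and let $G$ be a subgroup of the multiplicative group $R^\times$ of invertible elements of $R$. Let $f_G$ be the coset index function induced by $G$. Then $f_G$ is an $(n,m,S)$ zero-difference function from $(R,+)$ to $\mathbb{Z}_m$, where $$m=\sum_{a\in d(G)}\frac{M(G,a)}{a},\qquad S=\{N(G,a)\mid a\in R\setminus\{0\}\}.$$
   Context: For a subgroup $G$ of $R^\times$ and $r\in R$, the coset $rG=\{rg\mid g\in G\}$; the sets $rG$ ($r\in R$) form a partition $D_G$ of $R$. The coset index function induced by $G$ is $f_G(x)=h_G(C_x)$, where $C_x\in D_G$ is the coset containing $x$ and $h_G:D_G\to\mathbb{Z}_{|D_G|}$ is a fixed bijection. Notation: $N(G,a)$ is the size of the union over all $g\in G$ of the solution sets $\{x\in R\mid x(g-1)=a\}$; $d(G)$ is the set of sizes $|rG|$ as $r$ runs over $R$; for a positive integer $a$, $M(G,a)$ is the number of $r\in R$ with $|rG|=a$. Definition: for finite abelian groups $A,B$, a function $f:A\to B$ is an $(n,m,S)$ zero-difference function (ZDF), where $S\subset\mathbb{N}$, if $n=|A|$, $m=|f(A)|$, and for every nonzero $a\in A$, $|\{x\in A\mid f(x+a)-f(x)=0\}|\in S$. *)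

(* Defs.v *)
From HB Require Import structures.
From mathcomp Require Import all_boot all_order all_algebra all_fingroup.
Set Implicit Arguments. Unset Strict Implicit. Unset Printing Implicit Defensive.
Import GRing.Theory.
Local Open Scope ring_scope.

Section CosetIndex.
Variable R : finUnitRingType.
Variable G : {group {unit R}}.

Definition ucoset (r : R) : {set R} := [set r * val g | g in G].

Definition DG : {set {set R}} := [set ucoset r | r : R].

Definition NG (a : R) : nat := #|[set x : R | [exists g in G, x * (val g - 1) == a]]|.

Definition dG : seq nat := undup [seq #|ucoset r| | r <- enum R].

Definition MG (a : nat) : nat := #|[set r : R | #|ucoset r| == a]|.

Definition mG : rat := \sum_(a <- dG) (MG a)%:R / a%:R.

Definition SG : pred nat := fun k => [exists a : R, (a != 0) && (k == NG a)].

Definition fG (h : {set R} -> 'Z_#|DG|) (x : R) : 'Z_#|DG| := h (ucoset x).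
End CosetIndex.

Definition is_ZDF (A B : finZmodType) (f : A -> B) (n m : nat) (S : pred nat) : Prop :=
  [/\ n = #|A|, m = #|f @: [set: A]|
    & forall a : A, a != 0 -> S #|[set x : A | f (x + a) - f x == 0]| ].

(* Main.v *)
Require Import Defs.
From HB Require Import structures.
From mathcomp Require Import all_boot all_order all_algebra all_fingroup.
Set Implicit Arguments. Unset Strict Implicit. Unset Printing Implicit Defensive.
Import GRing.Theory Num.Theory.
Local Open Scope ring_scope.

Section L.
Variable R : finUnitRingType.
Variable G : {group {unit R}}.

Lemma mem_ucoset x : x \in ucoset G x.
Proof. apply/imsetP; exists 1%g; first exact: group1. by rewrite FinRing.val_unit1 mulr1. Qed.

Lemma ucoset_sub x y : y \in ucoset G x -> ucoset G y \subset ucoset G x.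
Proof.
case/imsetP=> g0 Hg0 ->; apply/subsetP=> z /imsetP [g Hg ->].
apply/imsetP; exists (g0 * g)%g; first exact: groupM.
by rewrite FinRing.val_unitM mulrA.
Qed.

Lemma ucoset_eq x y : (ucoset G y == ucoset G x) = (y \in ucoset G x).
Proof.
apply/eqP/idP=> [<-|H]; first exact: mem_ucoset.
apply/eqP; rewrite eqEsubset ucoset_sub //=.
apply: ucoset_sub; case/imsetP: H => g Hg ->.
apply/imsetP; exists (g^-1)%g. by rewrite groupV.
by rewrite -mulrA -FinRing.val_unitM mulgV FinRing.val_unit1 mulr1.
Qed.

Lemma in_DG x : ucoset G x \in DG G.
Proof. by apply/imsetP; exists x. Qed.



Lemma card_DG_gt1 : (1 < #|DG G|)%N.
Proof.
have H : ucoset G 0 != ucoset G 1.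
  rewrite eq_sym ucoset_eq; apply/negP=> /imsetP [g _].
  rewrite mul0r; exact/eqP/oner_neq0.
apply: (leq_trans _ (subset_leq_card (_ : [set ucoset G 0; ucoset G 1] \subset DG G))).
  by rewrite cards2 H.
by apply/subsetP=> z; rewrite !inE => /orP [] /eqP ->; apply: in_DG.
Qed.

Lemma coset_diff x a : (ucoset G (x + a) == ucoset G x) =
   [exists g in G, x * (val g - 1) == a].
Proof.
rewrite ucoset_eq; apply/imsetP/existsP => [[g Hg E]|[g /andP [Hg /eqP E]]].
  by exists g; rewrite Hg /= mulrBr mulr1 -E addrC addKr eqxx.
by exists g; last rewrite -E mulrBr mulr1 addrC subrK.
Qed.

Lemma sum_inv : \sum_(r : R) (#|ucoset G r|%:R : rat)^-1 = #|DG G|%:R.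
Proof.
rewrite (partition_big (fun r => ucoset G r) (mem (DG G))); last by move=> r _; apply: in_DG.
rewrite -sum1_card natr_sum; apply: eq_bigr => C /imsetP [x _ ->].
rewrite (eq_bigl (fun r => r \in ucoset G x)); last by move=> r; rewrite ucoset_eq.
rewrite (eq_bigr (fun _ => (#|ucoset G x|%:R : rat)^-1)); last first.
  by move=> r; rewrite -ucoset_eq => /eqP ->.
have n0 : (#|ucoset G x|%:R : rat) != 0.
  rewrite pnatr_eq0 -lt0n; apply/card_gt0P; exists x; apply: mem_ucoset.
rewrite sumr_const -(mulr_natr (#|ucoset G x|%:R : rat)^-1) mulVf //.
Qed.

Lemma mG_eq : mG G = #|DG G|%:R.
Proof.
rewrite -sum_inv /mG.
have U : uniq (dG G) by apply: undup_uniq.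
transitivity (\sum_(r : R) \sum_(a <- dG G | #|ucoset G r| == a) (a%:R : rat)^-1); last first.
  apply: eq_bigr => r _.
  rewrite (eq_bigl (pred1 #|ucoset G r|)); last by move=> a; rewrite /= eq_sym.
  rewrite -big_filter filter_pred1_uniq ?big_seq1 //.
  by rewrite mem_undup; apply: map_f; rewrite mem_enum.
rewrite (exchange_big_dep xpredT) //=.
apply: eq_bigr => a _.
rewrite (eq_bigl (fun i => i \in [set r | #|ucoset G r| == a])); last by move=> i; rewrite inE.
by rewrite sumr_const /MG mulr_natl.
Qed.
End L.

Theorem theorem2p3 (R : finUnitRingType) (G : {group {unit R}})
    (h : {set R} -> 'Z_#|DG G|)
    (h_inj : {in DG G &, injective h})
    (h_onto : h @: DG G = [set: 'Z_#|DG G|]) :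
  exists m : nat, (m%:R : rat) = mG G /\
    is_ZDF (fG h) #|R| m (SG G).
Proof.
exists #|DG G|; split; first by rewrite mG_eq.
split=> //.
  have -> : fG h @: [set: R] = [set: 'Z_#|DG G|].
    apply/eqP; rewrite eqEsubset subsetT /= -h_onto.
    apply/subsetP => z /imsetP [C /imsetP [x _ ->] ->].
    by apply/imsetP; exists x.
  by rewrite cardsT card_ord Zp_cast // card_DG_gt1.
move=> a Ha; apply/existsP; exists a; rewrite Ha /=.
rewrite /NG; apply/eqP; apply: eq_card => x; rewrite !inE subr_eq0 /fG -coset_diff.
apply/eqP/eqP => [/h_inj|->] //; apply; apply: in_DG.
Qed.
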